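(* Let $Y$ be a random variable with values in $[0,1]$ and continuous distribution function $F$. Then the following two properties hold simultaneously: (a) for every $a\in(0,1)$, \[ 2\min\{Y,1-Y\}\,\big|\,\big(2\min\{Y,1-Y\}\le a\big) \;\stackrel{\mathcal D}{=}\; a\cdot 2\min\{Y,1-Y\}, \] and (b) $I(Y\le 1/2)$ and $\max\{Y,1-Y\}$ are independent, if and only if there exist $c\in[0,1]$ and $\delta>0$ such that \[ F(x)=\begin{cases} c\,2^\delta x^\delta, & x\in[0,1/2],\\ 1-(1-c)\,2^\delta(1-x)^\delta, & x\in[1/2,1].\end{cases} \]
   Context: For a random variable $X$ and an event $A$ of positive probability, $X\,|\,A$ denotes the conditional distribution of $X$ given $A$. $I(\cdot)$ denotes the indicator of an event. $\stackrel{\mathcal D}{=}$ denotes equality in distribution. *)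

(* Defs.v *)
From Stdlib Require Import Reals Lra.
Open Scope R_scope.

Record prob_space := {
  Omega : Type;
  meas : (Omega -> Prop) -> Prop;
  P : (Omega -> Prop) -> R;
  meas_full : meas (fun _ => True);
  meas_compl : forall A, meas A -> meas (fun w => ~ A w);
  meas_union : forall A : nat -> Omega -> Prop,
      (forall n, meas (A n)) -> meas (fun w => exists n, A n w);
  P_ext : forall A B : Omega -> Prop, (forall w, A w <-> B w) -> P A = P B;
  P_nonneg : forall A, meas A -> 0 <= P A;
  P_full : P (fun _ => True) = 1;
  P_sigma_add : forall A : nat -> Omega -> Prop,
      (forall n, meas (A n)) ->
      (forall m n w, m <> n -> A m w -> A n w -> False) ->
      infinite_sum (fun n => P (A n)) (P (fun w => exists n, A n w))
}.

Definition random_variable (S : prob_space) (X : Omega S -> R) : Prop :=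
  forall x, meas S (fun w => X w <= x).

Definition cdf (S : prob_space) (X : Omega S -> R) (x : R) : R :=
  P S (fun w => X w <= x).

Definition indicator (S : prob_space) (A : Omega S -> Prop)
    (dec : forall w, {A w} + {~ A w}) : Omega S -> R :=
  fun w => if dec w then 1 else 0.

Definition cond_eq_in_dist (S : prob_space) (X : Omega S -> R)
    (A : Omega S -> Prop) (Z : Omega S -> R) : Prop :=
  0 < P S A /\
  forall z, P S (fun w => X w <= z /\ A w) / P S A = P S (fun w => Z w <= z).

Definition indep (S : prob_space) (X1 X2 : Omega S -> R) : Prop :=
  forall x y, P S (fun w => X1 w <= x /\ X2 w <= y) =
              P S (fun w => X1 w <= x) * P S (fun w => X2 w <= y).

(* x^d for x >= 0, d > 0, with 0^d = 0. *)
Definition rpow (x d : R) : R := if Rle_dec x 0 then 0 else Rpower x d.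

(* Main.v *)
Require Import Defs.
From Stdlib Require Import Reals Lra Lia ZArith Classical FunctionalExtensionality PropExtensionality.
Open Scope R_scope.

Lemma meas_ext (Sp : prob_space) (A B : Omega Sp -> Prop) :
  (forall w, A w <-> B w) -> meas Sp A -> meas Sp B.
Proof.
  intros H HA. assert (E : A = B).
  { apply functional_extensionality; intro w; apply propositional_extensionality; auto. }
  subst; auto.
Qed.

Lemma meas_empty (Sp : prob_space) : meas Sp (fun _ => False).
Proof.
  apply (meas_ext Sp (fun w => ~ True)); [tauto|]. apply meas_compl, meas_full.
Qed.

Lemma meas_union2 (Sp : prob_space) A B :
  meas Sp A -> meas Sp B -> meas Sp (fun w => A w \/ B w).
Proof.
  intros HA HB.
  apply (meas_ext Sp (fun w => exists n, (match n with O => A | _ => B end) w)).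
  { intro w; split.
    - intros [[|n] H]; auto.
    - intros [H|H]; [exists O|exists 1%nat]; auto. }
  apply meas_union; intros [|n]; auto.
Qed.



Lemma meas_inter2 (Sp : prob_space) A B :
  meas Sp A -> meas Sp B -> meas Sp (fun w => A w /\ B w).
Proof.
  intros HA HB.
  apply (meas_ext Sp (fun w => ~ (~ A w \/ ~ B w))).
  { intro w; split.
    - intro H; apply not_or_and in H; destruct H; split; apply NNPP; auto.
    - intros [H1 H2] [H|H]; auto. }
  apply meas_compl, meas_union2; apply meas_compl; auto.
Qed.

Lemma sum_const p n : sum_f_R0 (fun _ => p) n = INR (S n) * p.
Proof.
  induction n; simpl sum_f_R0. simpl; lra.
  rewrite IHn. rewrite (S_INR (S n)). lra.
Qed.

Lemma P_empty (Sp : prob_space) : P Sp (fun _ => False) = 0.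
Proof.
  pose proof (P_sigma_add Sp (fun _ _ => False) (fun _ => meas_empty Sp)) as H.
  assert (H' : infinite_sum (fun _ => P Sp (fun _ => False)) (P Sp (fun _ => False))).
  { assert (E : P Sp (fun w => exists n : nat, False) = P Sp (fun _ => False)).
    { apply P_ext. intro; split; [intros [_ []]| tauto]. }
    pose proof (H (fun _ _ _ _ x _ => x)) as H1. cbv beta in H1. rewrite E in H1. exact H1. }
  clear H.
  pose proof (P_nonneg Sp _ (meas_empty Sp)) as Hn.
  set (p := P Sp (fun _ => False)) in *.
  destruct (Rle_lt_or_eq_dec _ _ Hn) as [Hp|Hp]; [|auto].
  exfalso. destruct (H' p Hp) as [N HN].
  specialize (HN (S N) (le_S _ _ (le_n _))).
  rewrite sum_const in HN. unfold Rdist in HN.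
  rewrite Rabs_right in HN.
  - rewrite (S_INR (S N)), (S_INR N) in HN. pose proof (pos_INR N). nra.
  - rewrite (S_INR (S N)), (S_INR N). pose proof (pos_INR N). nra.
Qed.

Lemma lim_eventually (u : nat -> R) l x :
  (forall eps, eps > 0 -> exists N, forall n, (n >= N)%nat -> Rdist (u n) l < eps) ->
  (exists N0, forall n, (n >= N0)%nat -> u n = x) -> x = l.
Proof.
  intros H [N0 H0].
  destruct (Req_dec x l) as [|Hne]; auto. exfalso.
  assert (He : Rabs (x - l) > 0) by (apply Rabs_pos_lt; lra).
  destruct (H _ He) as [N HN].
  specialize (HN (max N N0) (Nat.le_max_l _ _)).
  rewrite H0 in HN by apply Nat.le_max_r. unfold Rdist in HN; lra.
Qed.

Lemma P_add2 (Sp : prob_space) A B :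
  meas Sp A -> meas Sp B -> (forall w, A w -> B w -> False) ->
  P Sp (fun w => A w \/ B w) = P Sp A + P Sp B.
Proof.
  intros HA HB Hd.
  set (Aseq := fun n : nat => match n with O => A | 1%nat => B | _ => fun _ => False end).
  assert (Hm : forall n, meas Sp (Aseq n)).
  { intros [|[|n]]; simpl; auto; apply meas_empty. }
  assert (Hdis : forall m n w, m <> n -> Aseq m w -> Aseq n w -> False).
  { intros [|[|m]] [|[|n]] w Hmn; simpl; try tauto; eauto. }
  pose proof (P_sigma_add Sp Aseq Hm Hdis) as H.
  rewrite (P_ext Sp (fun w => exists n, Aseq n w) (fun w => A w \/ B w)) in H.
  2:{ intro w; split.
      - intros [[|[|n]] Hn]; simpl in Hn; tauto.
      - intros [Hw|Hw]; [exists O|exists 1%nat]; auto. }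
  symmetry; apply (lim_eventually _ _ _ H).
  exists 1%nat. intros n Hn. induction n; [lia|].
  destruct n. simpl. lra.
  simpl sum_f_R0 in *. rewrite IHn by lia. simpl. rewrite P_empty. lra.
Qed.

Lemma P_compl (Sp : prob_space) A :
  meas Sp A -> P Sp (fun w => ~ A w) = 1 - P Sp A.
Proof.
  intro HA. pose proof (P_add2 Sp A (fun w => ~ A w) HA (meas_compl Sp A HA)) as H.
  rewrite (P_ext Sp _ (fun _ => True)) in H.
  - rewrite P_full in H. assert (H1 : 1 = P Sp A + P Sp (fun w => ~ A w)) by (apply H; tauto). lra.
  - intro w; split; [tauto| intros _; apply classic].
Qed.

Lemma P_mono (Sp : prob_space) A B :
  meas Sp A -> meas Sp B -> (forall w, A w -> B w) -> P Sp A <= P Sp B.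
Proof.
  intros HA HB H.
  rewrite (P_ext Sp B (fun w => A w \/ (B w /\ ~ A w))).
  - rewrite P_add2; auto.
    + assert (Hm : meas Sp (fun w => B w /\ ~ A w)) by (apply meas_inter2; auto; apply meas_compl; auto).
      pose proof (P_nonneg Sp _ Hm). lra.
    + apply meas_inter2; auto; apply meas_compl; auto.
    + tauto.
  - intro w; split; [intro Hb; destruct (classic (A w)); tauto | firstorder].
Qed.

Lemma P_le1 (Sp : prob_space) A : meas Sp A -> P Sp A <= 1.
Proof. intro; rewrite <- (P_full Sp). apply P_mono; auto. apply meas_full. Qed.

Lemma cont_eps f x : continuity_pt f x -> forall e, e > 0 ->
  exists a, a > 0 /\ forall x', x' <> x -> Rabs (x' - x) < a -> Rabs (f x' - f x) < e.
Proof.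
  intros H e He. destruct (H e He) as [a [Ha H2]]. exists a; split; auto.
  intros x' H1 H3. apply (H2 x'). split; [split; [exact I| auto]| exact H3].
Qed.
Lemma meas_le (Sp : prob_space) Y : random_variable Sp Y -> forall x, meas Sp (fun w => Y w <= x).
Proof. auto. Qed.

Lemma meas_lt (Sp : prob_space) Y : random_variable Sp Y -> forall x, meas Sp (fun w => Y w < x).
Proof.
  intros hY x.
  apply (meas_ext Sp (fun w => exists n, Y w <= x - / INR (S n))).
  { intro w; split.
    - intros [n Hn]. pose proof (pos_INR n). rewrite S_INR in Hn.
      assert (0 < / (INR n + 1)) by (apply Rinv_0_lt_compat; lra). lra.
    - intro H. destruct (archimed_cor1 (x - Y w)) as [N [HN1 HN2]]; [lra|].
      exists (pred N). rewrite Nat.succ_pred_pos by lia. lra. }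
  apply meas_union; intro n; apply hY.
Qed.

Lemma meas_ge (Sp : prob_space) Y : random_variable Sp Y -> forall x, meas Sp (fun w => x <= Y w).
Proof.
  intros hY x. apply (meas_ext Sp (fun w => ~ Y w < x)); [intro; lra|].
  apply meas_compl, meas_lt; auto.
Qed.

Lemma meas_gt (Sp : prob_space) Y : random_variable Sp Y -> forall x, meas Sp (fun w => x < Y w).
Proof.
  intros hY x. apply (meas_ext Sp (fun w => ~ Y w <= x)); [intro; lra|].
  apply meas_compl, hY.
Qed.

Lemma P_atom0 (Sp : prob_space) Y : random_variable Sp Y ->
  (forall x, continuity_pt (cdf Sp Y) x) -> forall x, P Sp (fun w => Y w = x) = 0.
Proof.
  intros hY hc x.
  assert (Hm : meas Sp (fun w => Y w = x)).
  { apply (meas_ext Sp (fun w => Y w <= x /\ x <= Y w)); [intro; lra|].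
    apply meas_inter2; [apply hY| apply meas_ge; auto]. }
  pose proof (P_nonneg Sp _ Hm).
  apply Rle_antisym; auto.
  apply Rnot_lt_le; intro Hp.
  destruct (cont_eps _ _ (hc x) _ Hp) as [a [Ha Hc]].
  specialize (Hc (x - a/2)). 
  assert (E : P Sp (fun w => Y w <= x) = P Sp (fun w => Y w <= x - a/2 \/ (x - a/2 < Y w /\ Y w <= x))).
  { apply P_ext; intro; lra. }
  rewrite P_add2 in E.
  2: apply hY. 2: apply meas_inter2; [apply meas_gt|apply hY]; auto.
  2: intros w; lra.
  assert (P Sp (fun w => Y w = x) <= P Sp (fun w => x - a/2 < Y w /\ Y w <= x)).
  { apply P_mono; auto. apply meas_inter2; [apply meas_gt|apply hY]; auto. intros w ->; lra. }
  unfold cdf in Hc.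
  assert (Rabs (P Sp (fun w => Y w <= x - a / 2) - P Sp (fun w => Y w <= x)) < P Sp (fun w => Y w = x)).
  { apply Hc; [lra|]. rewrite Rabs_left by lra. lra. }
  rewrite Rabs_left in H1 by lra. lra.
Qed.

Lemma F_lt (Sp : prob_space) Y : random_variable Sp Y ->
  (forall x, continuity_pt (cdf Sp Y) x) -> forall x, P Sp (fun w => Y w < x) = cdf Sp Y x.
Proof.
  intros hY hc x. unfold cdf.
  rewrite (P_ext Sp (fun w => Y w <= x) (fun w => Y w < x \/ Y w = x)) by (intro; lra).
  rewrite P_add2.
  - rewrite (P_atom0 Sp Y hY hc); lra.
  - apply meas_lt; auto.
  - apply (meas_ext Sp (fun w => Y w <= x /\ x <= Y w)); [intro; lra|].
    apply meas_inter2; [apply hY| apply meas_ge; auto].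
  - intros; lra.
Qed.

Lemma F_gt (Sp : prob_space) Y : random_variable Sp Y ->
  forall x, P Sp (fun w => x < Y w) = 1 - cdf Sp Y x.
Proof.
  intros hY x. unfold cdf. rewrite <- P_compl by apply hY. apply P_ext; intro; lra.
Qed.

Lemma F_ge (Sp : prob_space) Y : random_variable Sp Y ->
  (forall x, continuity_pt (cdf Sp Y) x) -> forall x, P Sp (fun w => x <= Y w) = 1 - cdf Sp Y x.
Proof.
  intros hY hc x. rewrite <- (F_lt Sp Y hY hc), <- P_compl by (apply meas_lt; auto).
  apply P_ext; intro; lra.
Qed.

Lemma F_int (Sp : prob_space) Y : random_variable Sp Y ->
  forall a b, a <= b -> P Sp (fun w => a < Y w /\ Y w <= b) = cdf Sp Y b - cdf Sp Y a.
Proof.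
  intros hY a b Hab. unfold cdf.
  rewrite (P_ext Sp (fun w => Y w <= b) (fun w => Y w <= a \/ (a < Y w /\ Y w <= b))) by (intro; lra).
  rewrite P_add2. lra. apply hY. apply meas_inter2; [apply meas_gt|apply hY]; auto.
  intros; lra.
Qed.

Lemma F_int2 (Sp : prob_space) Y : random_variable Sp Y ->
  (forall x, continuity_pt (cdf Sp Y) x) ->
  forall a b, a <= b -> P Sp (fun w => a <= Y w /\ Y w <= b) = cdf Sp Y b - cdf Sp Y a.
Proof.
  intros hY hc a b Hab. rewrite <- (F_lt Sp Y hY hc a). unfold cdf.
  rewrite (P_ext Sp (fun w => Y w <= b) (fun w => Y w < a \/ (a <= Y w /\ Y w <= b))) by (intro; lra).
  rewrite P_add2. lra. apply meas_lt; auto. apply meas_inter2; [apply meas_ge|apply hY]; auto.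
  intros; lra.
Qed.

Lemma F_tails (Sp : prob_space) Y : random_variable Sp Y ->
  (forall x, continuity_pt (cdf Sp Y) x) ->
  forall a b, a < b -> P Sp (fun w => Y w <= a \/ b <= Y w) = cdf Sp Y a + (1 - cdf Sp Y b).
Proof.
  intros hY hc a b Hab. rewrite P_add2. rewrite F_ge; auto.
  apply hY. apply meas_ge; auto. intros; lra.
Qed.
Lemma ln_le' x y : 0 < x -> x <= y -> ln x <= ln y.
Proof. intros. destruct (Req_dec x y) as [->|]; [lra|]. left; apply ln_increasing; lra. Qed.

Lemma nat_floor x : 0 <= x -> exists m : nat, INR m <= x < INR m + 1.
Proof.
  intro Hx. destruct (base_Int_part x) as [H1 H2].
  set (z := Int_part x) in *.
  assert (Hz : (0 <= z)%Z).
  { assert (-1 < z)%Z by (apply lt_IZR; simpl; lra). lia. }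
  exists (Z.to_nat z). rewrite INR_IZR_INZ, Z2Nat.id by auto. lra.
Qed.

Lemma cauchy_mult (G : R -> R) :
  (forall s t, 0 < s < 1 -> 0 < t < 1 -> G (s * t) = G s * G t) ->
  (forall t, 0 < t < 1 -> 0 < G t) ->
  (forall t, 0 < t < 1 -> G t <= 1) ->
  (forall s t, 0 < s -> s <= t -> t < 1 -> G s <= G t) ->
  (exists t0, 0 < t0 < 1 /\ G t0 < 1) ->
  exists d, 0 < d /\ forall t, 0 < t < 1 -> G t = Rpower t d.
Proof.
  intros Hmul Hpos Hle1 Hmono [t0 [Ht0 Ht0']].
  set (h := fun u => - ln (G (exp (- u)))).
  assert (He : forall u, 0 < u -> 0 < exp (- u) < 1).
  { intros u Hu. split; [apply exp_pos|]. rewrite <- exp_0. apply exp_increasing. lra. }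
  assert (Hadd : forall u v, 0 < u -> 0 < v -> h (u + v) = h u + h v).
  { intros u v Hu Hv. unfold h. replace (- (u + v)) with (- u + - v) by ring.
    rewrite exp_plus, Hmul by auto. rewrite ln_mult by (apply Hpos; auto). ring. }
  assert (Hnn : forall u, 0 < u -> 0 <= h u).
  { intros u Hu. unfold h. pose proof ln_1.
    assert (ln (G (exp (- u))) <= ln 1); [|lra].
    apply ln_le'; [apply Hpos; auto| apply Hle1; auto]. }
  assert (Hmon : forall u v, 0 < u -> u <= v -> h u <= h v).
  { intros u v Hu Huv. unfold h.
    assert (ln (G (exp (- v))) <= ln (G (exp (- u)))); [|lra].
    apply ln_le'; [apply Hpos, He; lra|].
    apply Hmono; [apply exp_pos| |apply He; lra].
    destruct (Req_dec u v) as [->|]; [lra|]. left; apply exp_increasing; lra. }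
  assert (Hnat : forall n u, 0 < u -> h (INR (S n) * u) = INR (S n) * h u).
  { induction n; intros u Hu. simpl; rewrite !Rmult_1_l; auto.
    rewrite S_INR. replace ((INR (S n) + 1) * u) with (INR (S n) * u + u) by ring.
    rewrite Hadd, IHn; auto. ring. apply Rmult_lt_0_compat; auto; apply lt_0_INR; lia. }
  set (k := h 1).
  assert (Hk0 : 0 <= k) by (apply Hnn; lra).
  assert (Hnatk : forall n, h (INR (S n)) = INR (S n) * k).
  { intro n. rewrite <- (Rmult_1_r (INR (S n))) at 1. apply Hnat; lra. }
  assert (Hlin : forall u, 0 < u -> h u = k * u).
  { intros u Hu.
    assert (Hb : forall N, (0 < N)%nat -> Rabs (h u - k * u) * INR N <= k).
    { intros N HN. destruct N as [|N']; [lia|].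
      pose proof (pos_INR N') as HN'. rewrite S_INR in *.
      destruct (nat_floor ((INR N' + 1) * u)) as [m [Hm1 Hm2]]; [nra|].
      assert (Hup : h ((INR N' + 1) * u) <= (INR m + 1) * k).
      { rewrite <- (S_INR m), <- Hnatk. apply Hmon; [nra|]. rewrite S_INR; lra. }
      assert (Hlo : INR m * k <= h ((INR N' + 1) * u)).
      { destruct m as [|m']. simpl. rewrite Rmult_0_l. apply Hnn; nra.
        rewrite <- Hnatk. apply Hmon; auto. pose proof (pos_INR m'); rewrite S_INR; lra. }
      rewrite <- (S_INR N') in Hup, Hlo. rewrite Hnat in Hup, Hlo by auto. rewrite S_INR in Hup, Hlo.
      pose proof (pos_INR m).
      assert (INR m * k <= (INR N' + 1) * u * k <= (INR m + 1) * k) by (split; nra).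
      destruct (Rcase_abs (h u - k * u)) as [Hs|Hs];
        [rewrite Rabs_left by lra | rewrite Rabs_right by lra]; nra. }
    set (d := Rabs (h u - k * u)) in *.
    assert (Hd : d = 0).
    { pose proof (Rabs_pos (h u - k * u)) as Hd0. fold d in Hd0.
      destruct (Rle_lt_or_eq_dec _ _ Hd0) as [Hd|Hd]; [|auto]. exfalso.
      destruct (archimed_cor1 (d / (k + 1))) as [N [HN1 HN2]].
      { apply Rdiv_lt_0_compat; lra. }
      specialize (Hb N HN2). assert (HNp : 0 < INR N) by (apply lt_0_INR; auto).
      assert (E1 : / INR N * INR N = 1) by (field; lra).
      assert (E2 : d / (k + 1) * (k + 1) = d) by (field; lra).
      assert (1 < d / (k + 1) * INR N) by nra.
      nra. }
    unfold d in Hd. destruct (Rcase_abs (h u - k * u)); [rewrite Rabs_left in Hd|rewrite Rabs_right in Hd]; lra. }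
  exists k. 
  assert (Hexp : forall t, 0 < t < 1 -> G t = Rpower t k).
  { intros t Ht. assert (Hl : ln t < 0) by (rewrite <- ln_1; apply ln_increasing; lra).
    pose proof (Hlin (- ln t) ltac:(lra)) as E. unfold h in E.
    rewrite Ropp_involutive, exp_ln in E by lra.
    unfold Rpower. rewrite <- (exp_ln (G t)) by (apply Hpos; auto).
    f_equal. lra. }
  split; auto.
  destruct (Rle_lt_or_eq_dec _ _ Hk0) as [|Hk]; auto.
  exfalso. rewrite Hexp in Ht0' by auto. rewrite <- Hk, Rpower_O in Ht0' by lra. lra.
Qed.
Lemma Zle_iff y t : 0 <= y <= 1 -> t < 1 ->
  (2 * Rmin y (1 - y) <= t <-> y <= t / 2 \/ 1 - t / 2 <= y).
Proof.
  intros Hy Ht. unfold Rmin; destruct (Rle_dec y (1 - y)); split; intros H.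
  - left; lra.
  - destruct H; lra.
  - right; lra.
  - destruct H; lra.
Qed.

Lemma Z_range y : 0 <= y <= 1 -> 0 <= 2 * Rmin y (1 - y) <= 1.
Proof. intros; unfold Rmin; destruct Rle_dec; lra. Qed.

Lemma meas_Z (Sp : prob_space) Y : random_variable Sp Y -> (forall w, 0 <= Y w <= 1) ->
  forall t, meas Sp (fun w => 2 * Rmin (Y w) (1 - Y w) <= t).
Proof.
  intros hY hr t. destruct (Rlt_dec t 1) as [Ht|Ht].
  - apply (meas_ext Sp (fun w => Y w <= t / 2 \/ 1 - t / 2 <= Y w)).
    { intro w; rewrite Zle_iff; auto; tauto. }
    apply meas_union2; [apply hY| apply meas_ge; auto].
  - apply (meas_ext Sp (fun _ => True)); [|apply meas_full].
    intro w; pose proof (Z_range _ (hr w)); split; intros; auto; lra.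
Qed.

Lemma G_formula (Sp : prob_space) Y : random_variable Sp Y -> (forall w, 0 <= Y w <= 1) ->
  (forall x, continuity_pt (cdf Sp Y) x) ->
  forall x, 0 <= x < 1/2 ->
  P Sp (fun w => 2 * Rmin (Y w) (1 - Y w) <= 2 * x) = cdf Sp Y x + (1 - cdf Sp Y (1 - x)).
Proof.
  intros hY hr hc x Hx. rewrite <- F_tails by (auto; lra).
  apply P_ext; intro w. rewrite Zle_iff by (auto; lra).
  replace (2 * x / 2) with x by field. tauto.
Qed.

Lemma G_ge1 (Sp : prob_space) Y : (forall w, 0 <= Y w <= 1) ->
  forall t, 1 <= t -> P Sp (fun w => 2 * Rmin (Y w) (1 - Y w) <= t) = 1.
Proof.
  intros hr t Ht. transitivity (P Sp (fun _ => True)); [|apply P_full]. apply P_ext; intro w.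
  pose proof (Z_range _ (hr w)); split; intros; auto; lra.
Qed.

Lemma G_neg (Sp : prob_space) Y : (forall w, 0 <= Y w <= 1) ->
  forall t, t < 0 -> P Sp (fun w => 2 * Rmin (Y w) (1 - Y w) <= t) = 0.
Proof.
  intros hr t Ht. transitivity (P Sp (fun _ => False)); [|apply P_empty]. apply P_ext; intro w.
  pose proof (Z_range _ (hr w)); split; intros; [lra|tauto].
Qed.

Lemma rpow_pos x d : 0 < x -> rpow x d = Rpower x d.
Proof. intro; unfold rpow; destruct Rle_dec; lra. Qed.

Lemma rpow_0 d : rpow 0 d = 0.
Proof. unfold rpow; destruct Rle_dec; lra. Qed.

Lemma Rpower_1_base d : Rpower 1 d = 1.
Proof. unfold Rpower. rewrite ln_1, Rmult_0_r, exp_0. auto. Qed.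

Lemma F0 (Sp : prob_space) Y : random_variable Sp Y -> (forall w, 0 <= Y w <= 1) ->
  (forall x, continuity_pt (cdf Sp Y) x) -> cdf Sp Y 0 = 0.
Proof.
  intros hY hr hc. rewrite <- (F_lt Sp Y hY hc). transitivity (P Sp (fun _ => False)); [|apply P_empty]. apply P_ext; intro w.
  pose proof (hr w); split; intros; [lra|tauto].
Qed.

Lemma F1 (Sp : prob_space) Y : (forall w, 0 <= Y w <= 1) -> cdf Sp Y 1 = 1.
Proof.
  intros hr. unfold cdf. transitivity (P Sp (fun _ => True)); [|apply P_full]. apply P_ext; intro w.
  pose proof (hr w); split; intros; auto; lra.
Qed.
Lemma forward (Sp : prob_space) (Y : Omega Sp -> R)
  (hY : random_variable Sp Y)
  (hrange : forall w, 0 <= Y w <= 1)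
  (hcont : forall x, continuity_pt (cdf Sp Y) x) :
  (forall a, 0 < a < 1 ->
       cond_eq_in_dist Sp
         (fun w => 2 * Rmin (Y w) (1 - Y w))
         (fun w => 2 * Rmin (Y w) (1 - Y w) <= a)
         (fun w => a * (2 * Rmin (Y w) (1 - Y w)))) ->
  indep Sp (indicator Sp (fun w => Y w <= 1/2) (fun w => Rle_dec (Y w) (1/2)))
               (fun w => Rmax (Y w) (1 - Y w)) ->
  (exists c delta, 0 <= c <= 1 /\ 0 < delta /\
     forall x,
       (0 <= x <= 1/2 -> cdf Sp Y x = c * rpow 2 delta * rpow x delta) /\
       (1/2 <= x <= 1 -> cdf Sp Y x = 1 - (1 - c) * rpow 2 delta * rpow (1 - x) delta)).
Proof.
  intros Ha Hb.
  set (G := fun t => P Sp (fun w => 2 * Rmin (Y w) (1 - Y w) <= t)).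
  set (F := cdf Sp Y).
  assert (Hmul : forall s t, 0 < s < 1 -> 0 < t < 1 -> G (s * t) = G s * G t).
  { intros s t Hs Ht. destruct (Ha t Ht) as [Hp Heq]. specialize (Heq (s * t)).
    assert (E1 : P Sp (fun w => 2 * Rmin (Y w) (1 - Y w) <= s * t /\ 2 * Rmin (Y w) (1 - Y w) <= t) = G (s * t)).
    { apply P_ext; intro w. assert (s * t <= t) by nra. split; intros; lra. }
    assert (E2 : P Sp (fun w => t * (2 * Rmin (Y w) (1 - Y w)) <= s * t) = G s).
    { apply P_ext; intro w. split; intros; nra. }
    rewrite E1, E2 in Heq. fold (G t) in Heq, Hp. rewrite <- Heq. field. lra. }
  assert (Hpos : forall t, 0 < t < 1 -> 0 < G t) by (intros t Ht; apply (Ha t Ht)).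
  assert (Hle1 : forall t, 0 < t < 1 -> G t <= 1) by (intros; apply P_le1, meas_Z; auto).
  assert (Hmono : forall s t, 0 < s -> s <= t -> t < 1 -> G s <= G t).
  { intros; apply P_mono; try apply meas_Z; auto. intros; lra. }
  assert (HF0 : F 0 = 0) by (apply F0; auto).
  assert (HF1 : F 1 = 1) by (apply F1; auto).
  assert (Hform : forall x, 0 <= x < 1/2 -> G (2 * x) = F x + (1 - F (1 - x))).
  { intros; apply G_formula; auto. }
  assert (Ht0 : exists t0, 0 < t0 < 1 /\ G t0 < 1).
  { destruct (cont_eps _ _ (hcont 0) (1/4)) as [a0 [Ha0 Hc0]]; [lra|].
    destruct (cont_eps _ _ (hcont 1) (1/4)) as [a1 [Ha1 Hc1]]; [lra|].
    set (x := Rmin (Rmin a0 a1) (1/2) / 2).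
    assert (Hx1 : 0 < x).
    { unfold x. apply Rdiv_lt_0_compat; [|lra]. repeat apply Rmin_glb_lt; lra. }
    assert (Hx2 : x <= a0 / 2 /\ x <= a1 / 2 /\ x <= 1/4).
    { unfold x. pose proof (Rmin_l (Rmin a0 a1) (1/2)). pose proof (Rmin_r (Rmin a0 a1) (1/2)).
      pose proof (Rmin_l a0 a1). pose proof (Rmin_r a0 a1). lra. }
    exists (2 * x). split; [lra|]. fold G. rewrite Hform by lra.
    specialize (Hc0 x). specialize (Hc1 (1 - x)). fold F in Hc0, Hc1.
    rewrite HF0 in Hc0. rewrite HF1 in Hc1.
    assert (H0 : Rabs (F x - 0) < 1/4) by (apply Hc0; [lra| rewrite Rabs_right; lra]).
    assert (H1 : Rabs (F (1 - x) - 1) < 1/4) by (apply Hc1; [lra| rewrite Rabs_left; lra]).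
    apply Rabs_def2 in H0. apply Rabs_def2 in H1. lra. }
  destruct (cauchy_mult G Hmul Hpos Hle1 Hmono Ht0) as [d [Hd HG]].
  set (c := F (1/2)).
  assert (Hcore : forall x, 0 < x < 1/2 ->
     F x = c * Rpower (2 * x) d /\ F (1 - x) = 1 - (1 - c) * Rpower (2 * x) d).
  { intros x Hx. unfold indep in Hb. specialize (Hb 0 (1 - x)). cbv beta in Hb.
    assert (E1 : P Sp (fun w => indicator Sp (fun w => Y w <= 1/2) (fun w => Rle_dec (Y w) (1/2)) w <= 0
                    /\ Rmax (Y w) (1 - Y w) <= 1 - x) = P Sp (fun w => 1/2 < Y w /\ Y w <= 1 - x)).
    { apply P_ext; intro w. unfold indicator, Rmax. destruct (Rle_dec (Y w) (1/2));
      destruct Rle_dec; split; intros; lra. }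
    assert (E2 : P Sp (fun w => indicator Sp (fun w => Y w <= 1/2) (fun w => Rle_dec (Y w) (1/2)) w <= 0)
                 = P Sp (fun w => 1/2 < Y w)).
    { apply P_ext; intro w. unfold indicator. destruct (Rle_dec (Y w) (1/2)); split; intros; lra. }
    assert (E3 : P Sp (fun w => Rmax (Y w) (1 - Y w) <= 1 - x) = P Sp (fun w => 1 - (1 - x) <= Y w /\ Y w <= 1 - x)).
    { apply P_ext; intro w. unfold Rmax. destruct Rle_dec; split; intros; lra. }
    rewrite E1, E2, E3, F_int, F_gt, F_int2 in Hb by (auto; lra).
    fold F c in Hb. replace (1 - (1 - x)) with x in Hb by ring.
    pose proof (Hform x ltac:(lra)) as Hf. rewrite HG in Hf by lra.
    split; nra. }
  assert (Hc01 : 0 <= c <= 1).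
  { unfold c, F, cdf. split; [apply P_nonneg, hY| apply P_le1, hY]. }
  assert (H2half : Rpower 2 d * Rpower (1/2) d = 1).
  { rewrite Rpower_mult_distr by lra. replace (2 * (1/2)) with 1 by field. apply Rpower_1_base. }
  exists c, d. split; [auto|]. split; [auto|]. intro x. split; intro Hx.
  - destruct (Req_dec x 0) as [->|Hx0].
    + rewrite rpow_0. fold F. rewrite HF0. ring.
    + destruct (Req_dec x (1/2)) as [->|Hx1].
      * rewrite !rpow_pos by lra. rewrite Rmult_assoc, H2half. fold F c. ring.
      * rewrite !rpow_pos by lra. rewrite Rmult_assoc, Rpower_mult_distr by lra.
        apply (Hcore x). lra.
  - destruct (Req_dec x 1) as [->|Hx0].
    + replace (1 - 1) with 0 by ring. rewrite rpow_0. fold F. rewrite HF1. ring.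
    + destruct (Req_dec x (1/2)) as [->|Hx1].
      * replace (1 - 1/2) with (1/2) by field.
        rewrite !rpow_pos by lra. rewrite Rmult_assoc, H2half. fold F c. ring.
      * rewrite !rpow_pos by lra. rewrite Rmult_assoc, Rpower_mult_distr by lra.
        destruct (Hcore (1 - x)) as [_ H]; [lra|]. replace (1 - (1 - x)) with x in H by ring.
        exact H.
Qed.
Lemma backward (Sp : prob_space) (Y : Omega Sp -> R)
  (hY : random_variable Sp Y)
  (hrange : forall w, 0 <= Y w <= 1)
  (hcont : forall x, continuity_pt (cdf Sp Y) x) :
  (exists c delta, 0 <= c <= 1 /\ 0 < delta /\
     forall x,
       (0 <= x <= 1/2 -> cdf Sp Y x = c * rpow 2 delta * rpow x delta) /\
       (1/2 <= x <= 1 -> cdf Sp Y x = 1 - (1 - c) * rpow 2 delta * rpow (1 - x) delta)) ->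
  (forall a, 0 < a < 1 ->
       cond_eq_in_dist Sp
         (fun w => 2 * Rmin (Y w) (1 - Y w))
         (fun w => 2 * Rmin (Y w) (1 - Y w) <= a)
         (fun w => a * (2 * Rmin (Y w) (1 - Y w))))
  /\ indep Sp (indicator Sp (fun w => Y w <= 1/2) (fun w => Rle_dec (Y w) (1/2)))
               (fun w => Rmax (Y w) (1 - Y w)).
Proof.
  intros [c [d [Hc [Hd Hf]]]].
  set (G := fun t => P Sp (fun w => 2 * Rmin (Y w) (1 - Y w) <= t)).
  set (F := cdf Sp Y).
  assert (HF0 : F 0 = 0) by (apply F0; auto).
  assert (HF1 : F 1 = 1) by (apply F1; auto).
  assert (H2half : Rpower 2 d * Rpower (1/2) d = 1).
  { rewrite Rpower_mult_distr by lra. replace (2 * (1/2)) with 1 by field. apply Rpower_1_base. }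
  assert (HFc : F (1/2) = c).
  { destruct (Hf (1/2)) as [H _]. unfold F; rewrite H by lra.
    rewrite !rpow_pos by lra. rewrite Rmult_assoc, H2half. ring. }
  assert (HG : forall t, 0 <= t <= 1 -> G t = rpow t d).
  { intros t Ht. destruct (Req_dec t 1) as [->|Ht1].
    - unfold G; rewrite G_ge1 by (auto; lra). rewrite rpow_pos, Rpower_1_base; lra.
    - replace t with (2 * (t / 2)) by field. unfold G.
      rewrite G_formula by (auto; lra). fold F.
      destruct (Req_dec t 0) as [->|Ht0].
      + replace (0/2) with 0 by field. replace (1 - 0) with 1 by ring.
        rewrite HF0, HF1, Rmult_0_r, rpow_0. ring.
      + destruct (Hf (t/2)) as [H1 _]. destruct (Hf (1 - t/2)) as [_ H2].
        unfold F; rewrite H1, H2 by lra. replace (1 - (1 - t/2)) with (t/2) by ring.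
        rewrite !rpow_pos by lra. rewrite <- Rpower_mult_distr by lra. ring. }
  split.
  - intros a Ha. 
    assert (HGa : G a = Rpower a d) by (rewrite HG, rpow_pos; lra).
    split. { fold (G a). rewrite HGa. apply exp_pos. }
    intro z. fold (G a). rewrite HGa.
    destruct (Rlt_dec z 0) as [Hz|Hz]; [|destruct (Rle_dec z a) as [Hza|Hza]].
    + transitivity 0.
      * rewrite (P_ext Sp _ (fun _ => False)), P_empty. unfold Rdiv; ring.
        intro w; pose proof (Z_range _ (hrange w)); split; intros; [lra|tauto].
      * rewrite (P_ext Sp _ (fun _ => False)), P_empty; auto.
        intro w; pose proof (Z_range _ (hrange w)); split; intros; [nra|tauto].
    + rewrite (P_ext Sp _ (fun w => 2 * Rmin (Y w) (1 - Y w) <= z)) by (intro w; split; intros; lra).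
      rewrite (P_ext Sp (fun w => a * _ <= z) (fun w => 2 * Rmin (Y w) (1 - Y w) <= z / a)).
      2:{ intro w. split; intros H.
          - apply (Rmult_le_reg_l a); [lra|]. replace (a * (z / a)) with z by (field; lra). auto.
          - apply (Rmult_le_reg_l (/ a)). apply Rinv_0_lt_compat; lra.
            replace (/ a * (a * (2 * Rmin (Y w) (1 - Y w)))) with (2 * Rmin (Y w) (1 - Y w)) by (field; lra).
            replace (/ a * z) with (z / a) by (field; lra). auto. }
      fold (G z) (G (z / a)).
      assert (Hza' : 0 <= z / a <= 1).
      { split. unfold Rdiv; apply Rmult_le_pos; [lra|]; left; apply Rinv_0_lt_compat; lra. apply (Rmult_le_reg_l a); [lra|].
        replace (a * (z / a)) with z by (field; lra). lra. }
      rewrite !HG by lra.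
      destruct (Req_dec z 0) as [->|Hz0].
      * replace (0 / a) with 0 by (field; lra). rewrite rpow_0. unfold Rdiv; ring.
      * rewrite !rpow_pos by (try apply Rdiv_lt_0_compat; lra).
        replace z with (z / a * a) at 1 by (field; lra).
        rewrite <- Rpower_mult_distr by (try apply Rdiv_lt_0_compat; lra).
        field. apply Rgt_not_eq, exp_pos.
    + rewrite (P_ext Sp _ (fun w => 2 * Rmin (Y w) (1 - Y w) <= a)) by (intro w; split; intros; lra).
      fold (G a). rewrite HGa.
      transitivity 1. field. apply Rgt_not_eq, exp_pos.
      symmetry. transitivity (P Sp (fun _ => True)); [|apply P_full].
      apply P_ext; intro w. pose proof (Z_range _ (hrange w)). split; intros; auto. nra.
  - unfold indep. intros x y.
    destruct (Rlt_dec x 0) as [Hx|Hx]; [|destruct (Rlt_dec x 1) as [Hx1|Hx1]].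
    + rewrite (P_ext Sp _ (fun _ => False)).
      rewrite (P_ext Sp (fun w => indicator _ _ _ w <= x) (fun _ => False)).
      rewrite P_empty; ring.
      all: intro w; unfold indicator; destruct Rle_dec; split; intros; lra.
    + rewrite (P_ext Sp (fun w => indicator _ _ _ w <= x) (fun w => 1/2 < Y w)).
      2: intro w; unfold indicator; destruct Rle_dec; split; intros; lra.
      rewrite F_gt by auto. fold F. rewrite HFc.
      destruct (Rlt_dec y (1/2)) as [Hy|Hy]; [|destruct (Rlt_dec y 1) as [Hy1|Hy1]].
      * rewrite (P_ext Sp _ (fun _ => False)).
        rewrite (P_ext Sp (fun w => Rmax _ _ <= y) (fun _ => False)).
        rewrite P_empty; ring.
        all: intro w; unfold indicator, Rmax; repeat destruct Rle_dec; split; intros; lra.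
      * rewrite (P_ext Sp _ (fun w => 1/2 < Y w /\ Y w <= y)).
        2: intro w; unfold indicator, Rmax; repeat destruct Rle_dec; split; intros; lra.
        rewrite (P_ext Sp (fun w => Rmax _ _ <= y) (fun w => 1 - y <= Y w /\ Y w <= y)).
        2: intro w; unfold Rmax; repeat destruct Rle_dec; split; intros; lra.
        rewrite F_int, F_int2 by (auto; lra). fold F. rewrite HFc.
        destruct (Hf y) as [_ H1]. destruct (Hf (1 - y)) as [H2 _].
        unfold F; rewrite H1, H2 by lra. replace (1 - y) with (1 - y) by ring. ring.
      * rewrite (P_ext Sp _ (fun w => 1/2 < Y w)).
        2: intro w; unfold indicator, Rmax; pose proof (hrange w); repeat destruct Rle_dec; split; intros; lra.
        rewrite (P_ext Sp (fun w => Rmax _ _ <= y) (fun _ => True)).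
        2: intro w; unfold Rmax; pose proof (hrange w); repeat destruct Rle_dec; split; intros; auto; lra.
        rewrite P_full, F_gt by auto. fold F. rewrite HFc. ring.
    + rewrite (P_ext Sp _ (fun w => Rmax (Y w) (1 - Y w) <= y)).
      rewrite (P_ext Sp (fun w => indicator _ _ _ w <= x) (fun _ => True)).
      rewrite P_full; ring.
      all: intro w; unfold indicator; destruct Rle_dec; split; intros; try split; auto; lra.
Qed.

Theorem lemma2 (S : prob_space) (Y : Omega S -> R)
  (hY : random_variable S Y)
  (hrange : forall w, 0 <= Y w <= 1)
  (hcont : forall x, continuity_pt (cdf S Y) x) :
  ( (forall a, 0 < a < 1 ->
       cond_eq_in_dist S
         (fun w => 2 * Rmin (Y w) (1 - Y w))
         (fun w => 2 * Rmin (Y w) (1 - Y w) <= a)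
         (fun w => a * (2 * Rmin (Y w) (1 - Y w))))
    /\ indep S (indicator S (fun w => Y w <= 1/2) (fun w => Rle_dec (Y w) (1/2)))
               (fun w => Rmax (Y w) (1 - Y w)) )
  <->
  (exists c delta, 0 <= c <= 1 /\ 0 < delta /\
     forall x,
       (0 <= x <= 1/2 -> cdf S Y x = c * rpow 2 delta * rpow x delta) /\
       (1/2 <= x <= 1 -> cdf S Y x = 1 - (1 - c) * rpow 2 delta * rpow (1 - x) delta)).
Proof.
  split.
  - intros [Ha Hb]. apply forward; auto.
  - apply backward; auto.
Qed.
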